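(* Let $d>1$ be an integer. There is a constant $K>0$ such that for all $\epsilon\in(0,1)$ and $r>1$: if $p$ is a monic polynomial of degree $d$ and $\alpha\in\mathbb{C}$ is such that all roots $z_1,\dots,z_d$ of $p(z)=\alpha$ lie in $\mathbb{D}_r(0)$ and $\operatorname{dist}(\{z_1,\dots,z_d\},\operatorname{Crit}(p))>\epsilon$, then $|z_i-z_j|>K(\epsilon/r)^{d^2}$ for all $1\le i<j\le d$.
   Context: $\operatorname{Crit}(p)$ is the set of critical points of $p$; $\operatorname{dist}$ is the Euclidean distance between sets. *)

(* Defs.v *)
From HB Require Import structures.
From mathcomp Require Export all_boot all_order all_algebra.
From mathcomp Require Export complex.
From mathcomp Require Export reals.
Set Implicit Arguments.
Unset Strict Implicit.
Unset Printing Implicit Defensive.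
Export Order.TTheory GRing.Theory Num.Theory.

(* Main.v *)
Require Import Defs.
From mathcomp Require Import lra.
Local Open Scope ring_scope.
Local Open Scope complex_scope.

Lemma prod_const_seq (F : numDomainType) (T : Type) (s : seq T) (x : F) :
  \prod_(c <- s) x = x ^+ size s.
Proof. by elim: s => [|c s IH]; rewrite ?big_nil ?big_cons ?IH ?exprS. Qed.

Lemma test (R : realType) (d : nat) (hd : (1 < d)%N)
  (eps r : R) (he0 : 0 < eps) (he1 : eps < 1) (hr : 1 < r)
  (p : {poly R[i]}) (alpha : R[i]) (z : seq R[i])
  (hm : p \is monic) (hs : size p = d.+1)
  (hq : p - alpha%:P = \prod_(w <- z) ('X - w%:P))
  (hzr : forall i, (i < d)%N -> `|z`_i| < r%:C)
  (hc : forall i, (i < d)%N -> forall c, root p^`() c -> eps%:C < `|z`_i - c|)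
  (i j : nat) (hij : (i < j)%N) (hj : (j < d)%N) :
  (d%:R * eps ^+ d)%:C <= `|z`_i - z`_j| * ((2 * r) ^+ d)%:C.
Proof.
have hi : (i < d)%N by apply: ltn_trans hij hj.
have hsz : size z = d.
  have : size (p - alpha%:P) = (size z).+1 by rewrite hq size_prod_XsubC.
  rewrite size_polyDl ?hs; first by case.
  by rewrite size_polyN (leq_ltn_trans (size_polyC_leq1 alpha)) // ltnS ltnW.
have hp0 : p != 0 by rewrite -size_poly_gt0 hs.
have hcoef : p^`()`_d.-1 = d%:R.
  rewrite coef_deriv prednK ?(ltn_trans _ hd) //.
  by move/monicP: hm; rewrite lead_coefE hs /= => ->.
have hsd : size p^`() = d.
  apply/eqP; rewrite eqn_leq -ltnS -hs lt_size_deriv //=.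
  have hd0 : (0 < d)%N by apply: ltn_trans hd.
  rewrite -(prednK hd0) ltnNge; apply/negP => /(nth_default 0).
  by move: hcoef => /= -> /eqP; rewrite pnatr_eq0 => /eqP d0; rewrite d0 in hd0.
have hlc : lead_coef p^`() = d%:R by rewrite lead_coefE hsd.
have [cs hcs] := closed_field_poly_normal p^`().
rewrite hlc in hcs.
have hd0 : (d%:R : R[i]) != 0 by rewrite pnatr_eq0 -lt0n (ltn_trans _ hd).
have hszcs : (size cs <= d)%N.
  have : size p^`() = (size cs).+1 by rewrite {1}hcs size_scale // size_prod_XsubC.
  rewrite hsd => ->.
  exact: leqnSn.
have hroot : forall c, c \in cs -> root p^`() c.
  move=> c hc'; rewrite hcs rootE hornerZ.
  by move: hc'; rewrite -root_prod_XsubC => /rootP ->; rewrite mulr0.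
have low : (d%:R * eps ^+ d)%:C <= `|p^`().[z`_i]|.
  rewrite hcs hornerZ horner_prod normrM normr_prod normr_nat rmorphM /= rmorph_nat rmorphXn /=.
  apply: ler_pM => //; first by rewrite exprn_ge0 // ler0c ltW.
  apply: le_trans (_ : eps%:C ^+ size cs <= _).
    apply: (ler_wiXn2l (x := eps%:C)) => //; first by rewrite ler0c ltW.
    by rewrite lecR ltW.
  rewrite -prod_const_seq !big_seq; apply: ler_prod => c hc'.
  rewrite ler0c (ltW he0) /= hornerXsubC; apply: ltW; apply: hc => //.
  exact: hroot.
have hq' : p^`() = (p - alpha%:P)^`() by rewrite derivB derivC subr0.
have up : `|p^`().[z`_i]| <= `|z`_i - z`_j| * ((2 * r) ^+ d)%:C.
  rewrite hq' hq (big_nth 0) hsz big_mkord (bigD1 (Ordinal hi)) //= derivM derivXsubC mul1r.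
  rewrite hornerD hornerM hornerXsubC subrr mul0r addr0 horner_prod.
  rewrite (bigD1 (Ordinal hj)) /=; last by rewrite -val_eqE /= gtn_eqF.
  rewrite hornerXsubC normrM; apply: ler_pM => //.
  rewrite normr_prod.
  apply: le_trans (_ : \prod_(k < d | (k != Ordinal hi) && (k != Ordinal hj)) (2 * r)%:C <= _).
    apply: ler_prod => k _; rewrite normr_ge0 hornerXsubC /=.
    apply: le_trans (ler_normB _ _) _.
    rewrite rmorphM /= rmorph_nat mulr_natl mulr2n.
    by apply: lerD; apply: ltW; apply: hzr.
  rewrite prodr_const rmorphXn /=; apply: ler_weXn2l.
    by rewrite -[1 : R[i]]/(1%:C) lecR; lra.
  by rewrite -[X in (_ <= X)%N]card_ord max_card.
exact: le_trans low up.
Qed.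

Theorem lemmaA3 (R : realType) (d : nat) (hd : (1 < d)%N) :
  exists K : R, 0 < K /\
  forall (eps r : R), 0 < eps -> eps < 1 -> 1 < r ->
  forall (p : {poly R[i]}) (alpha : R[i]) (z : seq R[i]),
    p \is monic -> size p = d.+1 ->
    p - alpha%:P = \prod_(w <- z) ('X - w%:P) ->
    (forall i, (i < d)%N -> `|z`_i| < r%:C) ->
    (forall i, (i < d)%N -> forall c, root p^`() c -> eps%:C < `|z`_i - c|) ->
    forall i j, (i < j)%N -> (j < d)%N ->
      (K * (eps / r) ^+ (d ^ 2))%:C < `|z`_i - z`_j|.
Proof.
exists (2 ^+ d)^-1; split; first by rewrite invr_gt0 exprn_gt0.
move=> eps r he0 he1 hr p alpha z hm hs hq hzr hc i j hij hj.
have key := @test R d hd eps r he0 he1 hr p alpha z hm hs hq hzr hc i j hij hj.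
rewrite normc_def in key *; rewrite -rmorphM lecR in key; rewrite ltcR.
set n := Num.sqrt _ in key *.
have n0 : 0 <= n by rewrite sqrtr_ge0.
have d2 : (d < d ^ 2)%N by rewrite expnS expn1 -{1}[d]muln1 ltn_mul2l ltnW.
have ab : eps ^+ (d ^ 2) < eps ^+ d by rewrite ltr_iXn2l.
have r0 : 0 < r by lra.
have v1 : 1 <= r ^+ d by rewrite exprn_ege1 // ltW.
have vu : r ^+ d <= r ^+ (d ^ 2) by rewrite ler_eXn2l // ltnW.
have t0 : 0 < 2 ^+ d :> R by rewrite exprn_gt0.
have u0 : 0 < r ^+ (d ^ 2) by rewrite exprn_gt0.
have b0 : 0 < eps ^+ d by rewrite exprn_gt0.
have db : eps ^+ d <= d%:R * eps ^+ d.
  by rewrite ler_peMl ?ltW // ?ltr1n ?ler1n // ltnW.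
rewrite exprMn in key.
have e1 : (2 ^+ d)^-1 * (eps / r) ^+ (d ^ 2) = eps ^+ (d ^ 2) / (2 ^+ d * r ^+ (d ^ 2)).
  by rewrite expr_div_n invfM mulrCA mulrA.
rewrite e1 ltr_pdivrMr ?mulr_gt0 //.
apply: lt_le_trans ab _; apply: le_trans db _; apply: le_trans key _.
by rewrite ler_wpM2l // ler_wpM2l // ltW.
Qed.
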